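(* Let $\mathbb{F}$ be a field of characteristic not equal to $2$, $d \ge 1$, and $\ell\in\mathbb{F}$ nonzero. If there exist points $v_0,\dots,v_d\in\mathbb{F}^d$ with $\|v_i-v_j\| = \ell$ for all $i\ne j$ (an equilateral $d$-simplex of sidelength $\ell$), then $(d+1)\left(\frac{\ell}{2}\right)^d$ is a square in $\mathbb{F}$. If moreover $d$ is even, then $d+1$ is a square in $\mathbb{F}$.
   Context: For $x,y\in\mathbb{F}^d$, $\|x-y\| = \sum_{i=1}^d (x_i-y_i)^2\in\mathbb{F}$. *)

(* Defs.v *)
From mathcomp Require Import all_boot all_algebra.
Set Implicit Arguments. Unset Strict Implicit. Unset Printing Implicit Defensive.
Import GRing.Theory.
Local Open Scope ring_scope.

(* Squared "distance" on F^d (a quadratic form value in F, no square root):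
   ||x - y|| = sum_i (x_i - y_i)^2. *)
Definition sqdist (F : fieldType) (d : nat) (x y : 'rV[F]_d) : F :=
  \sum_(i < d) (x 0 i - y 0 i) ^+ 2.

Definition is_square (F : fieldType) (a : F) : Prop := exists b : F, a = b ^+ 2.

(* Main.v *)
Require Import Defs.
From mathcomp Require Import all_boot all_algebra.
From mathcomp Require Import ring.
Import GRing.Theory.
Local Open Scope ring_scope.

Lemma detIuv (R : comNzRingType) n (u v : 'cV[R]_n) :
  \det (1%:M + u *m v^T) = 1 + (v^T *m u) 0 0.
Proof.
have E1 : block_mx (1%:M : 'M[R]_1) (- v^T) u (1%:M : 'M_n) =
  block_mx (1%:M : 'M[R]_1) 0 u (1%:M : 'M_n) *m
  block_mx (1%:M : 'M[R]_1) (- v^T) 0 (1%:M + u *m v^T).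
  rewrite mulmx_block !mulmx1 !mul1mx ?mulmx0 ?mul0mx ?addr0 ?add0r.
  by rewrite mulmxN addrCA addNr addr0.
have E2 : block_mx (1%:M : 'M[R]_1) (- v^T) u (1%:M : 'M_n) =
  block_mx (1%:M : 'M[R]_1) (- v^T) 0 (1%:M : 'M_n) *m
  block_mx (1%:M + v^T *m u) 0 u (1%:M : 'M_n).
  rewrite mulmx_block !mulmx1 !mul1mx ?mulmx0 ?mul0mx ?addr0 ?add0r.
  by rewrite mulNmx addrK.
have := congr1 determinant E1; rewrite E2 !det_mulmx !det_ublock !det_lblock.
rewrite !det1 !mul1r !mulr1 det_mx11 => <-.
by rewrite !mxE eqxx.
Qed.

Lemma gram_key (F : fieldType) (d : nat) (a b c : 'rV[F]_d) :
  (\sum_(k < d) (a 0 k - c 0 k) * (b 0 k - c 0 k)) * 2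
  = sqdist a c + sqdist b c - sqdist a b.
Proof.
rewrite /sqdist mulr_suml -big_split -sumrB /=.
by apply: eq_bigr => k _; ring.
Qed.

Theorem corollary4p4 (F : fieldType) (d : nat) (l : F)
  (hchar : ~~ (2%N \in [pchar F])) (hd : (1 <= d)%N) (hl : l != 0)
  (v : 'I_d.+1 -> 'rV[F]_d)
  (hv : forall i j : 'I_d.+1, i != j -> sqdist (v i) (v j) = l) :
  is_square ((d.+1)%:R * (l / 2) ^+ d)
  /\ (~~ odd d -> is_square ((d.+1)%:R : F)).
Proof.
have h2 : (2 : F) != 0.
  by move: hchar; rewrite inE /=.
set W : 'M[F]_d := \matrix_(i, j) (v (lift ord0 i) 0 j - v ord0 0 j).
set u : 'cV[F]_d := const_mx 1.
have HG : W *m W^T = (l / 2) *: (1%:M + u *m u^T).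
  apply/matrixP => i j; rewrite !mxE.
  under eq_bigr => k _ do rewrite !mxE.
  have hu : \sum_j0 u i j0 * u^T j0 j = 1 by rewrite big_ord1 !mxE mulr1.
  rewrite hu.
  have h0 : forall k : 'I_d, lift ord0 k != ord0 by move=> k; rewrite eq_sym neq_lift.
  case: (eqVneq i j) => [<-|nij].
    have := hv (lift ord0 i) ord0 (h0 i); rewrite /sqdist => E.
    under eq_bigr => k _ do rewrite -expr2.
    by rewrite E mulr1n; field.
  have := @gram_key F d (v (lift ord0 i)) (v (lift ord0 j)) (v ord0).
  have hij : lift ord0 i != lift ord0 j by apply: contra nij => /eqP /lift_inj ->.
  rewrite !hv ?h0 // => E.
  rewrite mulr0n add0r mulr1.
  by apply: (mulIf h2); rewrite E; field.
have Hdet : \det W ^+ 2 = (d.+1)%:R * (l / 2) ^+ d.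
  have := congr1 determinant HG.
  rewrite det_mulmx det_tr detZ detIuv ; rewrite expr2 => ->.
  rewrite !mxE (eq_bigr (fun _ => 1)); last by move=> k _; rewrite !mxE mulr1.
  by rewrite sumr_const card_ord mulrC addrC natr1.
split; first by exists (\det W).
move=> ev; have hk : d = (d./2 * 2)%N by rewrite -{1}(odd_double_half d) (negbTE ev) add0n -mul2n mulnC.
have hc : (l / 2) ^+ d./2 != 0 by rewrite expf_neq0 // mulf_neq0 // invr_eq0.
exists (\det W / (l / 2) ^+ d./2).
rewrite expr_div_n Hdet -exprM -hk mulfK //.
by rewrite {1}hk exprM sqrf_eq0.
Qed.
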